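(* Let $A=(a_0,\dots,a_r)$ be a complex $(c+1)\times(r+1)$ matrix of full rank with pairwise linearly independent columns. Then there exists a unique (up to order of summands) decomposition $\mathbb{C}^{c+1}=V_1\oplus\dots\oplus V_t$ into nonzero linear subspaces such that: (i) for each $0\le i\le r$ there is $j(i)\in\{1,\dots,t\}$ with $a_i\in V_{j(i)}$; (ii) whenever $\mathbb{C}^{c+1}=V'_1\oplus\dots\oplus V'_s$ is any decomposition into linear subspaces satisfying (i), then for every $1\le i\le t$ there is $1\le j\le s$ with $V_i\subseteq V'_j$. *)

(* Defs.v *)
From mathcomp Require Import all_boot all_algebra complex.
From mathcomp Require Import Rstruct.
Set Implicit Arguments. Unset Strict Implicit. Unset Printing Implicit Defensive.
Import GRing.Theory.
Local Open Scope ring_scope.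

Definition Cplx : numClosedFieldType := (Rdefinitions.R)[i].

Notation Cvec c := 'cV[Cplx]_(c.+1).

Definition is_direct_decomp (c t : nat) (V : 'I_t -> {vspace Cvec c}) : Prop :=
  directv (\sum_(i < t) V i)%VS /\ (\sum_(i < t) V i)%VS = fullv.

Definition cols_adapted (c r t : nat) (A : 'M[Cplx]_(c.+1, r.+1))
    (V : 'I_t -> {vspace Cvec c}) : Prop :=
  forall i : 'I_r.+1, exists j : 'I_t, col i A \in V j.

Definition finest_adapted_decomp (c r t : nat) (A : 'M[Cplx]_(c.+1, r.+1))
    (V : 'I_t -> {vspace Cvec c}) : Prop :=
  [/\ is_direct_decomp V,
      (forall j, V j != 0%VS),
      cols_adapted A V &
      (forall (s : nat) (W : 'I_s -> {vspace Cvec c}),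
          is_direct_decomp W -> cols_adapted A W ->
          forall i : 'I_t, exists j : 'I_s, (V i <= W j)%VS)].

(* Main.v *)
Require Import Defs.
From mathcomp Require Import all_boot all_algebra complex.
From mathcomp Require Import Rstruct.
From Stdlib Require Classical.
From mathcomp Require Import zify.
Set Implicit Arguments. Unset Strict Implicit. Unset Printing Implicit Defensive.
Import GRing.Theory.
Local Open Scope ring_scope.

Definition spanP (c r : nat) (A : 'M[Cplx]_(c.+1, r.+1)) (P : pred 'I_r.+1)
  : {vspace 'cV[Cplx]_(c.+1)} := (\sum_(a | P a) <[col a A]>)%VS.

Definition colgen (c r t : nat) (A : 'M[Cplx]_(c.+1, r.+1))
    (V : 'I_t -> {vspace 'cV[Cplx]_(c.+1)}) : Prop :=
  forall k, (V k <= spanP A (fun a => col a A \in V k))%VS.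

Definition good (c r t : nat) (A : 'M[Cplx]_(c.+1, r.+1))
    (V : 'I_t -> {vspace 'cV[Cplx]_(c.+1)}) : Prop :=
  [/\ is_direct_decomp V, (forall j, V j != 0%VS), cols_adapted A V & colgen A V].

Lemma dimcV (c : nat) : \dim (fullv : {vspace 'cV[Cplx]_(c.+1)}) = c.+1.
Proof. rewrite dimvf /= dim_matrix; exact: muln1. Qed.

Lemma decompE (c t : nat) (V : 'I_t -> {vspace 'cV[Cplx]_(c.+1)}) :
  is_direct_decomp V <-> (\sum_(i < t) \dim (V i) = c.+1)%N /\ (\sum_(i < t) V i)%VS = fullv.
Proof.
rewrite /is_direct_decomp directvE /=; split=> [[/eqP <- E]|[E1 E2]]; split=> //.
  by rewrite E dimcV.
by rewrite E1 E2 dimcV.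
Qed.

Lemma mem_spanP (c r : nat) (A : 'M[Cplx]_(c.+1, r.+1)) (P : pred 'I_r.+1) a :
  P a -> col a A \in spanP A P.
Proof. by move=> Pa; rewrite memvE; apply: (sumv_sup a) => //; apply: subvv. Qed.

Lemma span_colgen (c r : nat) (A : 'M[Cplx]_(c.+1, r.+1)) (P : pred 'I_r.+1) :
  (spanP A P <= spanP A (fun a => col a A \in spanP A P))%VS.
Proof.
apply/subv_sumP => a Pa; apply: (sumv_sup a); last exact: subvv.
exact: mem_spanP.
Qed.

Lemma span_full (c r : nat) (A : 'M[Cplx]_(c.+1, r.+1)) :
  \rank A = c.+1 -> spanP A predT = fullv.
Proof.
move=> rkA; apply/eqP; rewrite eqEsubv subvf /=; apply/subvP => v _.
have: row_full A^T by rewrite /row_full mxrank_tr rkA.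
case/row_fullP => B HB.
have -> : v = A *m (v^T *m B)^T.
  by rewrite -[A in A *m _]trmxK -trmx_mul -mulmxA HB mulmx1 trmxK.
set w := (v^T *m B)^T.
rewrite [w]matrix_sum_delta mulmx_sumr; apply: memv_suml => a _.
rewrite big_ord1 -scalemxAr; apply: memvZ.
rewrite -colE; exact: mem_spanP.
Qed.

Lemma good_le (c r t : nat) (A : 'M[Cplx]_(c.+1, r.+1)) (V : 'I_t -> {vspace 'cV[Cplx]_(c.+1)}) :
  good A V -> (t <= c.+1)%N.
Proof.
case=> /decompE[E _] nz _ _; rewrite -E.
rewrite -[X in (X <= _)%N]card_ord -sum1_card.
apply: leq_sum => i _; rewrite lt0n dimv_eq0; exact: nz.
Qed.

Lemma good1 (c r : nat) (A : 'M[Cplx]_(c.+1, r.+1)) :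
  \rank A = c.+1 -> good A (fun _ : 'I_1 => fullv).
Proof.
move=> rkA; split.
- by apply/decompE; rewrite !big_ord1 dimcV.
- move=> _; rewrite -dimv_eq0 dimcV //.
- by move=> a; exists ord0; rewrite memvf.
- move=> _; rewrite /spanP (eq_bigl predT) -/(spanP A predT) ?(span_full rkA) ?subvv //.
  by move=> a; rewrite memvf.
Qed.

Lemma direct_disj (c t : nat) (V : 'I_t -> {vspace 'cV[Cplx]_(c.+1)}) i k :
  is_direct_decomp V -> k != i -> (V i <= V k)%VS -> V i = 0%VS.
Proof.
case=> /directv_sumP D _ ki sub.
have := D i isT; move=> Di; apply/eqP; rewrite -subv0 -Di.
rewrite subv_cap subvv /=; apply: (sumv_sup k) => //.
Qed.
Lemma split_step (c r t s : nat) (A : 'M[Cplx]_(c.+1, r.+1))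
    (V : 'I_t -> {vspace 'cV[Cplx]_(c.+1)}) (W : 'I_s -> {vspace 'cV[Cplx]_(c.+1)}) i :
  good A V -> is_direct_decomp W -> cols_adapted A W ->
  ~~ [exists j, (V i <= W j)%VS] ->
  exists U : 'I_t.+1 -> {vspace 'cV[Cplx]_(c.+1)}, good A U.
Proof.
move=> [dV nzV adV cgV] dW adW notsub.
pose X j := spanP A (fun a => (col a A \in V i) && (col a A \in W j)).
have [/existsP[j0 Xj0]|/existsPn Xall] := boolP [exists j, X j != 0%VS]; last first.
  exfalso; move/negP: (nzV i); apply; rewrite -subv0.
  apply: subv_trans (cgV i) _; apply/subv_sumP => a Va.
  have [j Wj] := adW a.
  have := Xall j; rewrite negbK => /eqP <-.
  apply: (sumv_sup a); last exact: subvv.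
  by rewrite Va Wj.
set X0 := X j0.
pose Y := spanP A (fun a => (col a A \in V i) && (col a A \notin W j0)).
have XW : (X0 <= W j0)%VS.
  by apply/subv_sumP => a /andP[_ Wa]; rewrite -memvE.
have YW : (Y <= \sum_(j | j != j0) W j)%VS.
  apply/subv_sumP => a /andP[_ Wa]; have [j Wj] := adW a.
  apply: (sumv_sup j); last by rewrite -memvE.
  by apply: contraNneq Wa => <-.
have XY0 : (X0 :&: Y = 0)%VS.
  case: dW => /directv_sumP D _; have := D j0 isT => Dj0.
  apply/eqP; rewrite -subv0 -Dj0; exact: capvS.
have VXY : V i = (X0 + Y)%VS.
  apply: subv_anti; apply/andP; split.
    apply: subv_trans (cgV i) _.
    by rewrite /spanP (bigID (fun a => col a A \in W j0)) /=.
  rewrite subv_add; apply/andP; split; apply/subv_sumP => a /andP[Va _]; by rewrite -memvE.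
have dimXY : (\dim X0 + \dim Y = \dim (V i))%N.
  by rewrite -dimv_sum_cap XY0 dimv0 addn0 VXY.
have Ynz : Y != 0%VS.
  apply/negP => /eqP Y0; move/negP: notsub; apply; apply/existsP; exists j0.
  by rewrite VXY Y0 addv0.
pose U (k : 'I_t.+1) := if unlift ord_max k is Some k' then
   (if k' == i then X0 else V k') else Y.
have Ulift k : U (lift ord_max k) = if k == i then X0 else V k by rewrite /U liftK.
have Umax : U ord_max = Y by rewrite /U unlift_none.
have Uw k : U (widen_ord (leqnSn t) k) = if k == i then X0 else V k.
  have -> : widen_ord (leqnSn t) k = lift ord_max k by apply: ord_inj; rewrite lift_max.
  exact: Ulift.
exists U; split.
- case/decompE: dV => dimV sumV; apply/decompE; split.
    rewrite big_ord_recr /= Umax (eq_bigr _ (fun k _ => congr1 _ (Uw k))) /=.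
    rewrite (bigD1 i) //= eqxx.
    rewrite (eq_bigr (fun k => \dim (V k))); last by move=> k /negPf ->.
    by rewrite -[in RHS]dimV [in RHS](bigD1 i) //= -dimXY addnAC.
  rewrite big_ord_recr /= Umax (eq_bigr _ (fun k _ => Uw k)) /=.
  rewrite (bigD1 i) //= eqxx.
  rewrite (eq_bigr (fun k => V k)); last by move=> k /negPf ->.
  by rewrite -sumV [in RHS](bigD1 i) //= VXY -!addvA [(_ + Y)%VS]addvC.
- move=> k; case: (unliftP ord_max k) => [k' ->|->]; rewrite ?Ulift ?Umax //.
  by case: ifP => _; [exact: Xj0 | exact: nzV].
- move=> a; have [k Vk] := adV a.
  have [ki|ki] := eqVneq k i.
    subst k; case Wa: (col a A \in W j0).
      by exists (lift ord_max i); rewrite Ulift eqxx; apply: mem_spanP; rewrite Vk Wa.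
    by exists ord_max; rewrite Umax; apply: mem_spanP; rewrite Vk Wa.
  by exists (lift ord_max k); rewrite Ulift (negPf ki).
- move=> k; case: (unliftP ord_max k) => [k' ->|->]; rewrite ?Ulift ?Umax.
    case: ifP => _; [exact: span_colgen | exact: cgV].
  exact: span_colgen.
Qed.
Lemma step (c r t : nat) (A : 'M[Cplx]_(c.+1, r.+1))
    (V : 'I_t -> {vspace 'cV[Cplx]_(c.+1)}) :
  good A V -> finest_adapted_decomp A V \/
    exists U : 'I_t.+1 -> {vspace 'cV[Cplx]_(c.+1)}, good A U.
Proof.
move=> gV; case: (Classical_Prop.classic (finest_adapted_decomp A V)) => nf; [by left|right].
apply: Classical_Prop.NNPP => H; apply: nf; case: gV => dV nzV aV cV; split=> //.
move=> s W dW aW i; case: (boolP [exists j, (V i <= W j)%VS]) => [/existsP//|ne].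
by exfalso; apply: H; exact: split_step dW aW ne.
Qed.

Lemma existence (c r : nat) (A : 'M[Cplx]_(c.+1, r.+1)) :
  \rank A = c.+1 ->
  exists (t : nat) (V : 'I_t -> {vspace 'cV[Cplx]_(c.+1)}), finest_adapted_decomp A V.
Proof.
move=> rkA.
suff H : forall n t (V : 'I_t -> {vspace 'cV[Cplx]_(c.+1)}), good A V ->
    (c.+1 - t <= n)%N -> exists (t : nat) (V : 'I_t -> {vspace 'cV[Cplx]_(c.+1)}),
    finest_adapted_decomp A V.
  by apply: (H c.+1 1%N _ (good1 rkA)); rewrite leq_subr.
elim=> [|n IH] t V gV le; case: (step gV) => [f|[U gU]]; try by exists t, V.
  by have := good_le gU; lia.
by apply: (IH _ U gU); lia.
Qed.

Lemma uniqueness (c r t t' : nat) (A : 'M[Cplx]_(c.+1, r.+1))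
  (V : 'I_t -> {vspace 'cV[Cplx]_(c.+1)}) (W : 'I_t' -> {vspace 'cV[Cplx]_(c.+1)}) :
  finest_adapted_decomp A V -> finest_adapted_decomp A W ->
  exists f : 'I_t -> 'I_t', bijective f /\ forall i, W (f i) = V i.
Proof.
case=> dV nzV aV fV; case=> dW nzW aW fW.
have [f Hf] := fin_all_exists (fV _ W dW aW).
have [g Hg] := fin_all_exists (fW _ V dV aV).
have gf i : g (f i) = i.
  apply/eqP; apply: contraT => ne; case/negP: (nzV i); apply/eqP.
  apply: direct_disj dV ne _; exact: subv_trans (Hf i) (Hg (f i)).
have fg j : f (g j) = j.
  apply/eqP; apply: contraT => ne; case/negP: (nzW j); apply/eqP.
  apply: direct_disj dW ne _; exact: subv_trans (Hg j) (Hf (g j)).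
exists f; split; first by exists g.
move=> i; apply: subv_anti; rewrite Hf andbT.
by have := Hg (f i); rewrite gf.
Qed.

Theorem lemma3p5 (c r : nat) (A : 'M[Cplx]_(c.+1, r.+1)) :
  \rank A = c.+1 ->
  (forall i j : 'I_r.+1, i != j -> free [:: col i A; col j A]) ->
  (exists (t : nat) (V : 'I_t -> {vspace 'cV[Cplx]_(c.+1)}),
      finest_adapted_decomp A V) /\
  (forall (t t' : nat) (V : 'I_t -> {vspace 'cV[Cplx]_(c.+1)})
          (W : 'I_t' -> {vspace 'cV[Cplx]_(c.+1)}),
      finest_adapted_decomp A V -> finest_adapted_decomp A W ->
      exists f : 'I_t -> 'I_t', bijective f /\ forall i, W (f i) = V i).
Proof.
move=> rkA _; split; first exact: existence.
move=> t t' V W; exact: uniqueness.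
Qed.
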